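(* Let $M$ be a right $R$-module that is principally Goldie*-lifting and distributive. Then $M/\mathrm{Rad}(M)$ is principally semisimple.
   Context: $R$ is an associative ring with identity; modules are unital right $R$-modules; $\mathrm{Rad}(M)$ is the Jacobson radical of $M$. $M$ is distributive if for all submodules $A,B,C$, $A+(B\cap C)=(A+B)\cap(A+C)$. A module is principally semisimple if every cyclic submodule is a direct summand. $K\ll M$ means $K$ is small in $M$. For submodules $X,Y$ of $M$, $X\,\beta^*\,Y$ means $(X+Y)/X\ll M/X$ and $(X+Y)/Y\ll M/Y$. $M$ is principally Goldie*-lifting if for every cyclic submodule $X$ of $M$ there is a direct summand $D$ of $M$ with $X\,\beta^*\,D$. *)

(* Defs.v *)
(* Right R-modules are modelled as left modules over the
   converse ring R^c (right multiplication m.r is written r *: m). *)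
From HB Require Import structures.
From mathcomp Require Import all_boot all_order all_algebra.
Set Implicit Arguments. Unset Strict Implicit. Unset Printing Implicit Defensive.
Import GRing.Theory.
Local Open Scope ring_scope.

Section ModuleLattice.
Variables (R : nzRingType) (M : lmodType R^c).

Definition mset := M -> Prop.
Definition seteq (A B : mset) := forall x, A x <-> B x.
Definition subset (A B : mset) := forall x, A x -> B x.
Definition full (A : mset) := forall x, A x.
Definition zeroS : mset := fun x => x = 0.

Definition submod (A : mset) :=
  [/\ A 0, (forall x y, A x -> A y -> A (x + y)) &
      (forall (r : R^c) x, A x -> A (r *: x))].

Definition sumS (A B : mset) : mset :=
  fun x => exists a b, [/\ A a, B b & x = a + b].
Definition capS (A B : mset) : mset := fun x => A x /\ B x.

Definition cyclic (m : M) : mset := fun x => exists r : R^c, x = r *: m.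

Definition maximal (A : mset) :=
  [/\ submod A, ~ full A &
      forall B, submod B -> subset A B -> full B \/ seteq B A].
Definition Rad : mset := fun x => forall A, maximal A -> A x.

Definition small (K : mset) :=
  forall L, submod L -> full (sumS K L) -> full L.

(* For submodules X <= K of M: K/X << M/X, expressed through the
   correspondence between submodules of M/X and submodules of M containing X. *)
Definition small_quot (X K : mset) :=
  forall L, submod L -> subset X L -> full (sumS K L) -> full L.

Definition beta_star (X Y : mset) :=
  small_quot X (sumS X Y) /\ small_quot Y (sumS X Y).

Definition direct_summand (D : mset) :=
  submod D /\ exists D', [/\ submod D', full (sumS D D') & seteq (capS D D') zeroS].

Definition principally_Goldie_star_lifting :=
  forall m : M, exists D, direct_summand D /\ beta_star (cyclic m) D.

Definition distributive :=
  forall A B C, submod A -> submod B -> submod C ->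
    seteq (sumS A (capS B C)) (capS (sumS A B) (sumS A C)).

(* For submodules X <= K of M: K/X is a direct summand of M/X
   (again via the submodule correspondence for M/X). *)
Definition quot_direct_summand (X K : mset) :=
  exists N, [/\ submod N, subset X N, full (sumS K N) & seteq (capS K N) X].

(* M/X is principally semisimple: every cyclic submodule (m+X)R = (mR+X)/X
   of M/X is a direct summand of M/X. *)
Definition quot_principally_semisimple (X : mset) :=
  forall m : M, quot_direct_summand X (sumS (cyclic m) X).

End ModuleLattice.

Arguments principally_Goldie_star_lifting : clear implicits.
Arguments distributive : clear implicits.
Arguments Rad : clear implicits.

(* Main.v *)
Require Import Defs.
From HB Require Import structures.
From mathcomp Require Import all_boot all_order all_algebra.
From Stdlib Require Import Classical.
Import GRing.Theory.
Local Open Scope ring_scope.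

Lemma submod_sub (R : nzRingType) (M : lmodType R^c) (A : mset M) x y :
  submod A -> A x -> A y -> A (x - y).
Proof.
case=> A0 AD AZ Ax Ay; apply: AD => //.
by rewrite -scaleN1r; apply: AZ.
Qed.

Lemma submod_sumS (R : nzRingType) (M : lmodType R^c) (A B : mset M) :
  submod A -> submod B -> submod (sumS A B).
Proof.
move=> [A0 AD AZ] [B0 BD BZ]; split.
- by exists 0, 0; rewrite addr0.
- move=> x y [a [b [Aa Bb ->]]] [a' [b' [Aa' Bb' ->]]].
  exists (a + a'), (b + b'); split; [exact: AD|exact: BD|].
  by rewrite addrACA.
- move=> r x [a [b [Aa Bb ->]]]; exists (r *: a), (r *: b); split;
  [exact: AZ|exact: BZ|by rewrite scalerDr].
Qed.

Lemma submod_capS (R : nzRingType) (M : lmodType R^c) (A B : mset M) :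
  submod A -> submod B -> submod (capS A B).
Proof.
move=> [A0 AD AZ] [B0 BD BZ]; split.
- by [].
- by move=> x y [? ?] [? ?]; split; [exact: AD|exact: BD].
- by move=> r x [? ?]; split; [exact: AZ|exact: BZ].
Qed.

Lemma submod_cyclic (R : nzRingType) (M : lmodType R^c) (m : M) :
  submod (cyclic m).
Proof.
split.
- by exists 0; rewrite scale0r.
- by move=> x y [r ->] [s ->]; exists (r + s); rewrite scalerDl.
- by move=> r x [s ->]; exists (r * s); rewrite scalerA.
Qed.

Lemma submod_Rad (R : nzRingType) (M : lmodType R^c) : submod (Rad R M).
Proof.
split.
- by move=> A [[]].
- by move=> x y Hx Hy A HA; case: (HA) => [[_ AD _] _ _]; apply: AD; [apply: Hx|apply: Hy].
- by move=> r x Hx A HA; case: (HA) => [[_ _ AZ] _ _]; apply: AZ; apply: Hx.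
Qed.

Arguments submod_cyclic {R M} m.
Arguments submod_capS {R M A B}.
Arguments submod_sumS {R M A B}.
Arguments submod_sub {R M A x y}.
Arguments submod_Rad : clear implicits.
Lemma sumS_comm {R : nzRingType} {M : lmodType R^c} {A B : mset M} {x} :
  sumS A B x -> sumS B A x.
Proof. by move=> [a [b [Aa Bb ->]]]; exists b, a; rewrite addrC. Qed.

Theorem proposition3p13 (R : nzRingType) (M : lmodType R^c) :
  principally_Goldie_star_lifting R M -> distributive R M ->
  quot_principally_semisimple (Rad R M).
Proof.
move=> HG Hd m.
have [D [[sD [D' [sD' fDD' capDD']]] [HX HD]]] := HG m.
set X := cyclic m.
have sX : submod X by apply: submod_cyclic.
have sRad := submod_Rad R M.
have fXD' : full (sumS X D').
  apply: HX; first by apply: submod_sumS.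
  - by move=> x Xx; exists x, 0; rewrite addr0; split => //; case: sD' .
  - move=> y; have [d [d' [Dd Dd' ->]]] := fDD' y.
    exists (0 + d), (0 + d'); split.
    + by exists 0, d; split => //; case: sX.
    + by exists 0, d'; split => //; case: sX.
    + by rewrite !add0r.
have XD'Rad : forall x, X x -> D' x -> Rad R M x.
  move=> x Xx D'x A HA.
  apply: NNPP => nAx.
  case: (HA) => [sA _ HAm].
  have sB : submod (sumS A (cyclic x)) by apply: submod_sumS => //; apply: submod_cyclic.
  have subAB : Defs.subset A (sumS A (cyclic x)).
    by move=> y Ay; exists y, 0; split => //; [case: (submod_cyclic x)|rewrite addr0].
  have [fB|eB] := HAm _ sB subAB.
  - have sL : submod (sumS D (capS D' A)) by apply: submod_sumS => //; apply: submod_capS.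
    have subDL : Defs.subset D (sumS D (capS D' A)).
      by move=> y Dy; exists y, 0; split => //; [case: (submod_capS sD' sA)|rewrite addr0].
    have fL := HD _ sL subDL.
    have [d [a [Dd [D'a Aa] xE]]] : sumS D (capS D' A) x.
      apply: fL => y.
      have [d [d' [Dd Dd' ->]]] := fDD' y.
      have [a [z [Aa [r ->] d'E]]] := fB d'.
      have Xrx : X (r *: x) by case: sX => _ _ H; apply: H.
      have D'rx : D' (r *: x) by case: sD' => _ _ H; apply: H.
      have D'a : D' a.
        have -> : a = d' - r *: x by rewrite d'E addrK.
        exact: submod_sub.
      exists (r *: x + d), (0 + a); split.
      + by exists (r *: x), d.
      + by exists 0, a; split => //; case: sD.
      + by rewrite d'E add0r -addrA [in RHS]addrCA [in RHS](addrC (r *: x)).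
    have d0 : d = 0.
      apply/(capDD' d); split => //.
      have -> : d = x - a by rewrite xE addrK.
      exact: submod_sub.
    by apply: nAx; rewrite xE d0 add0r.
  - apply: nAx; apply/(eB x).
    by exists 0, x; split; [case: sA| exists 1; rewrite scale1r| rewrite add0r].
exists (sumS D' (Rad R M)); split.
- exact: submod_sumS.
- by move=> x Rx; exists 0, x; split => //; [case: sD'|rewrite add0r].
- move=> y; have [x [d' [Xx Dd' ->]]] := fXD' y.
  exists (x + 0), (d' + 0); split; last by rewrite !addr0.
  + by exists x, 0; split => //; case: sRad.
  + by exists d', 0; split => //; case: sRad.
- move=> z; split.
  + move=> [Hz1 Hz2].
    have := proj2 (Hd _ _ _ sRad sX sD' z) (conj (sumS_comm Hz1) (sumS_comm Hz2)).
    move=> [r [w [Rr [Xw D'w] ->]]].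
    by case: sRad => _ RD _; apply: RD => //; apply: XD'Rad.
  + move=> Rz; split.
    * by exists 0, z; split => //; [case: sX|rewrite add0r].
    * by exists 0, z; split => //; [case: sD'|rewrite add0r].
Qed.
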